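(* Let $\mathbb F\in\{\mathbb R,\mathbb C\}$ and let $\hat U,\tilde U:(0,1]\to GL_n(\mathbb F)$ be continuous. Suppose $\hat U$ contracts the Lie algebra $\mathfrak g$ (structure constants $c^k_{ij}$ in a fixed basis) to the algebra $\hat{\mathfrak g}$ (structure constants $\hat c^k_{ij}$) and $\tilde U$ contracts $\hat{\mathfrak g}$ to the algebra $\tilde{\mathfrak g}$ (structure constants $\tilde c^k_{ij}$). Then there exists a continuous monotonic function $f:(0,1]\to(0,1]$ with $f(\varepsilon)\to0$ as $\varepsilon\to0^+$ such that $\check U_\varepsilon=\hat U_{f(\varepsilon)}\tilde U_\varepsilon$ contracts $\mathfrak g$ to $\tilde{\mathfrak g}$.
   Context: A continuous $U:(0,1]\to GL_n(\mathbb F)$ contracts the algebra with structure constants $c^k_{ij}$ (in a fixed basis) to the algebra with structure constants $c'^{k'}_{i'j'}$ if $\lim_{\varepsilon\to0^+}(U_\varepsilon)^i_{i'}(U_\varepsilon)^j_{j'}(U^{-1}_\varepsilon)^{k'}_kc^k_{ij}=c'^{k'}_{i'j'}$ for all indices (summation over repeated indices). *)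

(* Defs.v *)
From HB Require Import structures.
From mathcomp Require Import all_boot all_order all_algebra.
From mathcomp Require Import reals complex.
Set Implicit Arguments. Unset Strict Implicit. Unset Printing Implicit Defensive.
Import Order.TTheory GRing.Theory Num.Theory.
Local Open Scope ring_scope.

Section Defs.
Variable R : realType.

Definition in01 (x : R) : bool := (0 < x) && (x <= 1).

Variable F : numFieldType.

Definition rcont01 (f : R -> R) : Prop :=
  forall x, in01 x -> forall e : R, 0 < e ->
    exists2 d : R, 0 < d & forall y, in01 y -> `|y - x| < d -> `|f y - f x| < e.

Definition mcont01 (n : nat) (U : R -> 'M[F]_n) : Prop :=
  forall x, in01 x -> forall (i j : 'I_n) (e : F), 0 < e ->
    exists2 d : R, 0 < d &
      forall y, in01 y -> `|y - x| < d -> `|U y i j - U x i j| < e.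

Definition GLvalued (n : nat) (U : R -> 'M[F]_n) : Prop :=
  forall x, in01 x -> U x \in unitmx.

Definition lim0 (g : R -> F) (l : F) : Prop :=
  forall e : F, 0 < e -> exists2 d : R, 0 < d &
    forall x, in01 x -> x < d -> `|g x - l| < e.

(* structure constants: c i j k = c^k_{ij} *)
Definition sconst (n : nat) := 'I_n -> 'I_n -> 'I_n -> F.

(* (U_eps)^i_{i'} (U_eps)^j_{j'} (U_eps^{-1})^{k'}_k c^k_{ij};
   the matrix entry U i i' is (U)^i_{i'} *)
Definition transformed (n : nat) (U : R -> 'M[F]_n) (c : sconst n)
    (i' j' k' : 'I_n) (eps : R) : F :=
  \sum_(i < n) \sum_(j < n) \sum_(k < n)
     U eps i i' * U eps j j' * invmx (U eps) k' k * c i j k.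

Definition contracts (n : nat) (U : R -> 'M[F]_n) (c c' : sconst n) : Prop :=
  forall i' j' k' : 'I_n, lim0 (transformed U c i' j' k') (c' i' j' k').

Definition is_lie (n : nat) (c : sconst n) : Prop :=
  (forall i j k, c i j k = - c j i k) /\
  (forall i j k m, \sum_(l < n) (c i j l * c l k m + c j k l * c l i m
                                 + c k i l * c l j m) = 0).

Definition composition_property : Prop :=
  forall (n : nat) (c ch ct : sconst n) (Uh Ut : R -> 'M[F]_n),
    is_lie c ->
    mcont01 Uh -> GLvalued Uh -> mcont01 Ut -> GLvalued Ut ->
    contracts Uh c ch -> contracts Ut ch ct ->
    exists f : R -> R,
      [/\ rcont01 f,
          forall x, in01 x -> in01 (f x),
          {in in01 &, forall x y, x <= y -> f x <= f y}
            \/ {in in01 &, forall x y, x <= y -> f y <= f x},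
          (forall e : R, 0 < e -> exists2 d : R, 0 < d &
              forall x, in01 x -> x < d -> `|f x| < e) &
          contracts (fun eps => Uh (f eps) *m Ut eps) c ct].

End Defs.

(* Main.v *)
Require Import Defs.
From HB Require Import structures.
From mathcomp Require Import all_boot all_order all_algebra.
From mathcomp Require Import reals complex.
From mathcomp Require Import classical_sets ring lra.
From Stdlib Require Import ClassicalEpsilon.
Set Implicit Arguments. Unset Strict Implicit. Unset Printing Implicit Defensive.
Import Order.TTheory GRing.Theory Num.Theory Num.Def.
Local Open Scope ring_scope.
Local Open Scope classical_set_scope.
Section Cont.
Variables (R : realType) (F : numFieldType).
Definition contAt (h : R -> F) (x : R) := forall e : F, 0 < e ->
  exists2 d : R, 0 < d & forall y, in01 y -> `|y - x| < d -> `|h y - h x| < e.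

Lemma posmin (a b : F) : 0 < a -> 0 < b -> exists c : F, [/\ 0 < c, c <= a & c <= b].
Proof.
move=> a0 b0; exists (a * b / (a + b)); have ab0 : 0 < a + b by rewrite addr_gt0.
split; first by rewrite divr_gt0 // mulr_gt0.
  by rewrite ler_pdivrMr // ler_pM2l // lerDr ltW.
by rewrite ler_pdivrMr // mulrC ler_pM2l // lerDl ltW.
Qed.

Lemma contAt_cst (a : F) x : contAt (fun _ => a) x.
Proof. by move=> e e0; exists 1 => // y _ _; rewrite subrr normr0. Qed.

Lemma contAt_ext01 (g h : R -> F) x : in01 x -> (forall y, in01 y -> g y = h y) ->
  contAt h x -> contAt g x.
Proof.
move=> x01 E ch e e0; have [d d0 Hd] := ch e e0; exists d => // y y01 yx.
by rewrite !E //; apply: Hd.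
Qed.

Lemma contAt_ext (g h : R -> F) x : (forall y, g y = h y) ->
  contAt h x -> contAt g x.
Proof.
move=> E ch e e0; have [d d0 Hd] := ch e e0; exists d => // y y01 yx.
by rewrite !E //; apply: Hd.
Qed.

Lemma contAt_add (g h : R -> F) x : contAt g x -> contAt h x ->
  contAt (fun t => g t + h t) x.
Proof.
move=> cg ch e e0.
have e20 : 0 < e / 2 by rewrite divr_gt0.
have [d1 d10 H1] := cg _ e20; have [d2 d20 H2] := ch _ e20.
exists (minr d1 d2); first by rewrite lt_min d10 d20.
move=> y y01; rewrite lt_min => /andP[y1 y2].
rewrite opprD addrACA (le_lt_trans (ler_normD _ _)) //.
by rewrite [e](splitr e) ltrD // ?H1 ?H2.
Qed.

Lemma contAt_opp (g : R -> F) x : contAt g x -> contAt (fun t => - g t) x.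
Proof.
move=> cg e e0; have [d d0 H] := cg e e0; exists d => // y y01 yx.
by rewrite -opprD normrN H.
Qed.

Lemma contAt_mul (g h : R -> F) x : contAt g x -> contAt h x ->
  contAt (fun t => g t * h t) x.
Proof.
move=> cg ch e e0.
pose K := `|g x| + `|h x| + 1.
have K0 : 0 < K by rewrite ltr_wpDl // addr_ge0.
have eK : 0 < e / (2 * K) by rewrite divr_gt0 // mulr_gt0.
have [e' [e'0 e'1 e'2]] := posmin (@ltr01 F) eK.
have [d1 d10 H1] := cg _ e'0; have [d2 d20 H2] := ch _ e'0.
exists (minr d1 d2); first by rewrite lt_min d10 d20.
move=> y y01; rewrite lt_min => /andP[y1 y2].
have A1 := H1 _ y01 y1; have A2 := H2 _ y01 y2.
have : g y * h y - g x * h x = (g y - g x) * h y + g x * (h y - h x).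
  by rewrite mulrBl mulrBr addrA subrK.
move=> ->; rewrite (le_lt_trans (ler_normD _ _)) //.
have hy : `|h y| <= `|h x| + 1.
  have : `|h y| <= `|h y - h x| + `|h x|.
    by rewrite (le_trans _ (ler_normD _ _)) // subrK.
  move=> /le_trans; apply; rewrite addrC lerD2l; apply: ltW; exact: lt_le_trans A2 e'1.
rewrite !normrM.
have : `|g y - g x| * `|h y| + `|g x| * `|h y - h x| < e' * K + e' * K.
  apply: (@le_lt_trans _ _ (`|g y - g x| * K + `|g x| * `|h y - h x|)).
    rewrite lerD2r ler_wpM2l //; apply: (le_trans hy); by rewrite /K -addrA lerDr.
  rewrite ltr_leD //; first by rewrite ltr_pM2r.
  rewrite mulrC; apply: ler_pM => //; first exact: ltW.
  by rewrite /K -addrA ler_wpDr // addr_ge0.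
move=> /lt_le_trans; apply.
rewrite -mulr2n -mulr_natl mulrA -mulrA (mulrC e') mulrA.
apply: (@le_trans _ _ (2 * K * (e / (2 * K)))).
  by rewrite ler_wpM2l // mulr_ge0 // ltW.
by rewrite mulrC divfK // mulf_neq0 // gt_eqF.
Qed.

Lemma contAt_big (I : Type) (r : seq I) (P : pred I) (G : I -> R -> F) x :
  (forall i, contAt (G i) x) ->
  contAt (fun t => \sum_(i <- r | P i) G i t) x.
Proof.
move=> cG; elim: r => [|i r IH].
  by apply: contAt_ext (contAt_cst 0 x) => y; rewrite big_nil.
apply: contAt_ext (_ : contAt (fun t => if P i then G i t + \sum_(j <- r | P j) G j t
   else \sum_(j <- r | P j) G j t) x) => [y|]; first by rewrite big_cons.
by case: (P i) => //; apply: contAt_add.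
Qed.

Lemma contAt_prod (I : Type) (r : seq I) (P : pred I) (G : I -> R -> F) x :
  (forall i, contAt (G i) x) ->
  contAt (fun t => \prod_(i <- r | P i) G i t) x.
Proof.
move=> cG; elim: r => [|i r IH].
  by apply: contAt_ext (contAt_cst 1 x) => y; rewrite big_nil.
apply: contAt_ext (_ : contAt (fun t => if P i then G i t * \prod_(j <- r | P j) G j t
   else \prod_(j <- r | P j) G j t) x) => [y|]; first by rewrite big_cons.
by case: (P i) => //; apply: contAt_mul.
Qed.

Lemma contAt_det n (M : R -> 'M[F]_n) x : (forall i j, contAt (fun t => M t i j) x) ->
  contAt (fun t => \det (M t)) x.
Proof.
move=> cM; rewrite /determinant.
apply: contAt_big => s; apply: contAt_mul; first exact: contAt_cst.
by apply: contAt_prod => i; apply: cM.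
Qed.

Lemma contAt_inv (g : R -> F) x : g x != 0 -> contAt g x -> contAt (fun t => (g t)^-1) x.
Proof.
move=> gx0 cg e e0.
have gx : 0 < `|g x| by rewrite normr_gt0.
have q1 : 0 < `|g x| / 2 by rewrite divr_gt0.
have q2 : 0 < e * (`|g x| ^+ 2 / 2) by rewrite mulr_gt0 // divr_gt0 // exprn_gt0.
have [e' [e'0 e'1 e'2]] := posmin q1 q2.
have [d d0 H] := cg _ e'0; exists d => // y y01 yx.
have A := H _ y01 yx.
have B1 : `|g y - g x| < `|g x| / 2 by exact: lt_le_trans A e'1.
have B2 : `|g y - g x| < e * (`|g x| ^+ 2 / 2) by exact: lt_le_trans A e'2.
have gy : `|g x| / 2 <= `|g y|.
  have : `|g x| <= `|g x - g y| + `|g y| by rewrite (le_trans _ (ler_normD _ _)) // subrK.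
  rewrite distrC => h1; rewrite -(lerD2l (`|g y - g x|)); apply: le_trans h1.
  by rewrite {2}(splitr `|g x|) lerD2r ltW.
have gy0 : g y != 0 by rewrite -normr_gt0 (lt_le_trans _ gy) // divr_gt0.
rewrite (_ : (g y)^-1 - (g x)^-1 = (g x - g y) / (g y * g x)); last first.
  by rewrite mulrBl invfM [g x * _]mulrC -mulrA mulVf // mulr1 mulrA mulfV // mul1r.
rewrite normrM normfV normrM distrC ltr_pdivrMr ?mulr_gt0 ?normr_gt0 //.
apply: lt_le_trans B2 _; apply: ler_wpM2l; first exact: ltW.
by rewrite expr2 mulrAC ler_wpM2r.
Qed.
End Cont.
Section Bnd.
Variables (R : realType) (F : numFieldType).

Lemma fin_bound (T : finType) (P : T -> F -> Prop) :
  (forall i B B', P i B -> B <= B' -> P i B') ->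
  (forall i, exists B, 0 <= B /\ P i B) -> exists B, 0 <= B /\ forall i, P i B.
Proof.
move=> mon ex.
suff [B [B0 HB]] : exists B, 0 <= B /\ forall i, i \in enum T -> P i B.
  by exists B; split => // i; apply: HB; rewrite mem_enum.
elim: (enum T) => [|j s [B [B0 HB]]]; first by exists 0; split.
have [C [C0 HC]] := ex j; exists (B + C); split; first by rewrite addr_ge0.
move=> i; rewrite in_cons => /orP[/eqP->|iin].
  by apply: mon HC _; rewrite lerDr.
by apply: mon (HB _ iin) _; rewrite lerDl.
Qed.

Lemma fin_thr (T : finType) (P : T -> R -> Prop) :
  (forall i d d', P i d -> 0 < d' -> d' <= d -> P i d') ->
  (forall i, exists2 d, 0 < d & P i d) -> exists2 d, 0 < d & forall i, P i d.
Proof.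
move=> mon ex.
suff [d d0 Hd] : exists2 d, 0 < d & forall i, i \in enum T -> P i d.
  by exists d => // i; apply: Hd; rewrite mem_enum.
elim: (enum T) => [|j s [d d0 Hd]]; first by exists 1.
have [d' d'0 Hd'] := ex j; exists (minr d d'); first by rewrite lt_min d0 d'0.
have m0 : 0 < minr d d' by rewrite lt_min d0 d'0.
move=> i; rewrite in_cons => /orP[/eqP->|iin].
  by apply: mon Hd' _ _ => //; rewrite ge_min lexx orbT.
by apply: mon (Hd _ iin) _ _ => //; rewrite ge_min lexx.
Qed.

Lemma bounded_on (h : R -> F) (a : R) : 0 < a -> a <= 1 ->
  (forall x, in01 x -> contAt h x) ->
  exists B : F, forall t, a <= t -> t <= 1 -> `|h t| <= B.
Proof.
move=> a0 a1 ch.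
pose S : set R := fun t => [/\ a <= t, t <= 1 & exists B : F, forall s, a <= s -> s <= t -> `|h s| <= B].
have Sa : S a.
  split => //; exists `|h a| => r ar ra.
  by have -> : r = a by apply/eqP; rewrite eq_le ar ra.
have hS : has_sup S.
  by split; [exists a | exists 1 => t; case].
set s := sup S.
have as_ : a <= s by apply: sup_upper_bound.
have s1 : s <= 1 by apply: ge_sup; [exists a | move=> t; case].
have s01 : in01 s by rewrite /in01 s1 andbT (lt_le_trans a0).
have [d d0 Hd] := ch s s01 1 ltr01.
have [t [at_ t1 [B HB]] st] := sup_adherent d0 hS.
pose t' := minr (s + d / 2) 1.
have d20 : 0 < d / 2 by rewrite divr_gt0.
have B0 : 0 <= B by apply: le_trans (HB a (lexx a) at_).
have Ht' : forall r, a <= r -> r <= t' -> `|h r| <= B + (`|h s| + 1).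
  move=> r ar rt'; have [rt|tr] := lerP r t.
    by rewrite (le_trans (HB r ar rt)) // lerDl addr_ge0.
  have r01 : in01 r by rewrite /in01 (lt_le_trans a0 ar) (le_trans rt') // ge_min lexx orbT.
  have rs : `|r - s| < d.
    have h1 := lt_trans st tr.
    have h2 : r <= s + d / 2 by apply: (le_trans rt'); rewrite ge_min lexx.
    rewrite ltr_norml /s; rewrite /s in h2; apply/andP; split; lra.
  have := Hd r r01 rs => hr.
  have : `|h r| <= `|h r - h s| + `|h s| by rewrite (le_trans _ (ler_normD _ _)) // subrK.
  move=> /le_trans; apply; rewrite -[X in X <= _]add0r; apply: lerD => //.
  by rewrite addrC lerD2l ltW.
have St' : S t'.
  split => //; last by exists (B + (`|h s| + 1)).
    by rewrite /t' le_min a1 (le_trans as_) // lerDl ltW.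
  by rewrite /t' ge_min lexx orbT.
have t's : t' <= s by apply: sup_upper_bound.
have t'1 : t' = 1.
  move: t's; rewrite /t' /s; case: (lerP (sup S + d / 2) 1) => h1.
    by move=> h2; lra.
  by [].
by exists (B + (`|h s| + 1)) => r ar r1; apply: Ht' => //; rewrite t'1.
Qed.
End Bnd.
Section Alg.
Variables (R : realType) (F : numFieldType).

Lemma invmxM' n (A B : 'M[F]_n) : A \in unitmx -> B \in unitmx ->
  invmx (A *m B) = invmx B *m invmx A.
Proof.
move=> uA uB; have uAB : A *m B \in unitmx by rewrite unitmx_mul uA.
have M : (A *m B) *m (invmx B *m invmx A) = 1%:M.
  by rewrite mulmxA -(mulmxA A) mulmxV // mulmx1 mulmxV.
by rewrite -[RHS]mul1mx -(mulVmx uAB) -mulmxA M mulmx1.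
Qed.

Lemma pull3 n (G : 'I_n -> 'I_n -> 'I_n -> 'I_n -> F) :
  \sum_i \sum_j \sum_k \sum_a G i j k a = \sum_a \sum_i \sum_j \sum_k G i j k a.
Proof.
under eq_bigr do under eq_bigr do rewrite exchange_big.
under eq_bigr do rewrite exchange_big.
by rewrite exchange_big.
Qed.

Lemma trans_mul n (A B : 'M[F]_n) (c : sconst F n) i' j' k' (e : R) :
  A \in unitmx -> B \in unitmx ->
  transformed (fun _ : R => A *m B) c i' j' k' e =
  transformed (fun _ : R => B) (fun a b c' => transformed (fun _ : R => A) c a b c' e) i' j' k' e.
Proof.
move=> uA uB; rewrite /transformed (invmxM' uA uB).
have E : forall i j k, (A *m B) i i' * (A *m B) j j' * (invmx B *m invmx A) k' k * c i j k =
  \sum_a \sum_b \sum_c0 (B a i' * B b j' * invmx B k' c0 *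
     (A i a * A j b * invmx A c0 k * c i j k)).
  move=> i j k; rewrite !mxE !mulr_suml; apply: eq_bigr => a _.
  rewrite mulr_sumr !mulr_suml; apply: eq_bigr => b _.
  rewrite mulr_sumr !mulr_suml; apply: eq_bigr => c0 _.
  ring.
under eq_bigr => i _ do under eq_bigr => j _ do under eq_bigr => k _ do rewrite E.
rewrite pull3.
under eq_bigr => a _ do rewrite pull3.
under eq_bigr => a _ do under eq_bigr => b _ do rewrite pull3.
apply: eq_bigr => a _; apply: eq_bigr => b _; apply: eq_bigr => c0 _.
rewrite !mulr_sumr; apply: eq_bigr => i _.
rewrite !mulr_sumr; apply: eq_bigr => j _.
by rewrite !mulr_sumr.
Qed.
End Alg.
Section Inf.
Variable R : realType.
Definition setf (h : R -> R) (e : R) : set R :=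
  [set r | exists t, in01 t /\ r = h t + maxr 0 (e - t)].
Definition fof h e := inf (setf h e).

Variable h : R -> R.
Hypothesis hpos : forall t, in01 t -> 0 <= h t.

Lemma in01_1 : in01 (1 : R).
Proof. by rewrite /in01 ltr01 lexx. Qed.

Lemma setf_ne e : setf h e !=set0.
Proof. by exists (h 1 + maxr 0 (e - 1)); exists 1; split => //; exact: in01_1. Qed.

Lemma setf_lb e : has_lbound (setf h e).
Proof.
exists 0 => r [t [t01 ->]]; rewrite addr_ge0 ?hpos //.
by rewrite le_max lexx.
Qed.

Lemma fof_le e t : in01 t -> fof h e <= h t + maxr 0 (e - t).
Proof. by move=> t01; apply: ge_inf; [exact: setf_lb | exists t]. Qed.

Lemma fof_lb e L : (forall t, in01 t -> L <= h t + maxr 0 (e - t)) -> L <= fof h e.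
Proof. by move=> H; apply: lb_le_inf; [exact: setf_ne | move=> r [t [t01 ->]]; apply: H]. Qed.

Lemma fof_mono x y : x <= y -> fof h x <= fof h y.
Proof.
move=> xy; apply: fof_lb => t t01; apply: (le_trans (fof_le x t01)).
by rewrite lerD2l; apply: le_max2 => //; rewrite lerD2r.
Qed.

Lemma fof_lip x y : fof h x - `|x - y| <= fof h y.
Proof.
apply: fof_lb => t t01; rewrite lerBlDr; apply: (le_trans (fof_le x t01)).
rewrite -addrA lerD2l ge_max; apply/andP; split.
  by rewrite addr_ge0 // le_max lexx.
have h1 : y - t <= maxr 0 (y - t) by rewrite le_max lexx orbT.
have h2 : x - y <= `|x - y| by apply: ler_norm.
lra.
Qed.

Lemma fof_lip2 x y : `|fof h x - fof h y| <= `|x - y|.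
Proof.
have := fof_lip x y; have := fof_lip y x; rewrite (distrC y x).
by move=> ? ?; rewrite ler_norml; apply/andP; split; lra.
Qed.
End Inf.

Fixpoint Dmin (R : realType) (Df : nat -> R) (m : nat) : R :=
  match m with 0 => minr 1 (Df 0%N) | m'.+1 => minr (Dmin Df m') (Df m'.+1) end.

Section DminS.
Variables (R : realType) (Df : nat -> R).
Hypothesis Dpos : forall m, 0 < Df m.
Lemma Dmin_pos m : 0 < Dmin Df m.
Proof. by elim: m => [|m IH] /=; rewrite lt_min ?ltr01 ?IH Dpos. Qed.
Lemma Dmin_le m : Dmin Df m <= Df m.
Proof. by case: m => [|m] /=; rewrite ge_min lexx orbT. Qed.
Lemma Dmin_anti m m' : (m <= m')%N -> Dmin Df m' <= Dmin Df m.
Proof.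
elim: m' => [|m' IH]; first by rewrite leqn0 => /eqP ->.
rewrite leq_eqVlt => /orP[/eqP -> //|]; rewrite ltnS => /IH.
by apply: le_trans; rewrite /= ge_min lexx.
Qed.
End DminS.
Section Lin.
Variables (R : realType) (F : numFieldType).

Lemma trans_sub n (U : R -> 'M[F]_n) (c1 c2 : sconst F n) i j k e :
  transformed U c1 i j k e - transformed U c2 i j k e =
  transformed U (fun a b c => c1 a b c - c2 a b c) i j k e.
Proof.
rewrite /transformed -sumrB; apply: eq_bigr => a _.
rewrite -sumrB; apply: eq_bigr => b _.
rewrite -sumrB; apply: eq_bigr => c _.
by rewrite mulrBr.
Qed.

Lemma trans_bound n (U : R -> 'M[F]_n) (c : sconst F n) i j k e (B E : F) :
  0 <= B -> (forall a b, `|U e a b| <= B) -> (forall a b, `|invmx (U e) a b| <= B) ->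
  (forall a b c', `|c a b c'| <= E) ->
  `|transformed U c i j k e| <= (n ^ 3)%:R * B ^+ 3 * E.
Proof.
move=> B0 HU HI Hc.
have E0 : 0 <= E := le_trans (normr_ge0 _) (Hc i j k).
rewrite /transformed; apply: (le_trans (ler_norm_sum _ _ _)).
apply: (@le_trans _ _ (\sum_(a < n) \sum_(b < n) \sum_(c' < n) (B ^+ 3 * E))).
  apply: ler_sum => a _; apply: (le_trans (ler_norm_sum _ _ _)).
  apply: ler_sum => b _; apply: (le_trans (ler_norm_sum _ _ _)).
  apply: ler_sum => c' _; rewrite !normrM (_ : B ^+ 3 = B * B * B); last by rewrite !exprS expr0 mulr1 mulrA.
  apply: ler_pM => //; first by rewrite !mulr_ge0.
  apply: ler_pM => //; first by rewrite !mulr_ge0.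
  by apply: ler_pM.
rewrite !sumr_const !card_ord -!mulrnA.
have -> : (n * (n * n) = n ^ 3)%N by rewrite !expnS expn0 muln1.
by rewrite -mulrA mulr_natl.
Qed.

Lemma contAt_invmx n (M : R -> 'M[F]_n) x : in01 x ->
  (forall y, in01 y -> M y \in unitmx) ->
  (forall i j, contAt (fun t => M t i j) x) ->
  forall k l, contAt (fun t => invmx (M t) k l) x.
Proof.
move=> x01 uM cM k l.
apply: (@contAt_ext01 _ _ _
  (fun t => (\det (M t))^-1 * ((-1) ^+ (l + k) * \det (row' l (col' k (M t)))))) => //.
  by move=> y y01; rewrite /invmx uM // !mxE.
apply: contAt_mul.
  apply: contAt_inv; last exact: contAt_det.
  by rewrite -unitfE -unitmxE uM.
apply: contAt_mul; first exact: contAt_cst.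
by apply: contAt_det => i j; apply: (contAt_ext (h := fun t => M t (lift l i) (lift k j))) => // y; rewrite !mxE.
Qed.
End Lin.
Section MF.
Variable R : realType.
Definition mf (t : R) : nat := Num.truncn (t^-1).

Lemma mf_lt t : in01 t -> ((mf t).+1%:R : R)^-1 < t.
Proof.
case/andP=> t0 _.
have ti : 0 < t^-1 by rewrite invr_gt0.
have := trunc_itv (ltW ti) => /andP[_ h].
by rewrite -[X in _ < X]invrK ltf_pV2 // posrE ?invr_gt0 // ltr0n.
Qed.

Lemma mf_anti t t' : in01 t -> in01 t' -> t <= t' -> (mf t' <= mf t)%N.
Proof.
case/andP=> t0 _ /andP[t'0 _] tt'; apply: le_truncn.
by rewrite lef_pV2 // posrE.
Qed.

Lemma mf_big t (M : nat) : in01 t -> t < (M.+1%:R)^-1 -> (M < mf t)%N.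
Proof.
case/andP=> t0 _ tM.
have ti : 0 < t^-1 by rewrite invr_gt0.
have := trunc_itv (ltW ti) => /andP[_ h].
have : (M.+1%:R : R) < t^-1.
  by rewrite -[X in X < _]invrK ltf_pV2 // posrE ?invr_gt0 // ltr0n.
by move=> /lt_trans /(_ h); rewrite ltr_nat ltnS.
Qed.

Lemma inv_in01 (m : nat) : in01 ((m.+1%:R : R)^-1).
Proof. by rewrite /in01 invr_gt0 ltr0n /= invf_le1 ?ltr0n // ler1n. Qed.
End MF.
Theorem comp_gen (R : realType) (F : numFieldType)
  (HA : forall e : F, 0 < e -> exists m : nat, (m.+1%:R : F)^-1 < e) :
  composition_property R F.
Proof.
move=> n c ch ct Uh Ut _ _ GUh cUt GUt cH cT.
pose a (m : nat) : R := (m.+1%:R)^-1.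
have cE : forall i j x, in01 x -> contAt (fun t => Ut t i j) x.
  by move=> i j x x01 e e0; apply: cUt.
have cI : forall i j x, in01 x -> contAt (fun t => invmx (Ut t) i j) x.
  by move=> i j x x01; apply: contAt_invmx => // k l; apply: cE.
have HB : forall m : nat, exists B : F, 0 <= B /\ forall t, a m <= t -> t <= 1 ->
   forall i j, `|Ut t i j| <= B /\ `|invmx (Ut t) i j| <= B.
  move=> m; have /andP[am0 am1] := inv_in01 R m.
  have exB : forall p : 'I_n * 'I_n, exists B, 0 <= B /\ forall t, a m <= t -> t <= 1 ->
        `|Ut t p.1 p.2| <= B /\ `|invmx (Ut t) p.1 p.2| <= B.
    move=> [i j].
    have [B1 H1] := bounded_on am0 am1 (fun x x01 => cE i j x x01).
    have [B2 H2] := bounded_on am0 am1 (fun x x01 => cI i j x x01).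
    have B10 : 0 <= B1 := le_trans (normr_ge0 _) (H1 _ (lexx _) am1).
    have B20 : 0 <= B2 := le_trans (normr_ge0 _) (H2 _ (lexx _) am1).
    exists (B1 + B2); split; first by rewrite addr_ge0.
    move=> t t1 t2; split.
      by rewrite (le_trans (H1 t t1 t2)) // lerDl.
    by rewrite (le_trans (H2 t t1 t2)) // lerDr.
  have [B [B0 HBt]] := fin_bound (T := ('I_n * 'I_n)%type)
     (P := fun p B => forall t, a m <= t -> t <= 1 ->
        `|Ut t p.1 p.2| <= B /\ `|invmx (Ut t) p.1 p.2| <= B)
     (fun p B B' H BB' t t1 t2 => let: conj h1 h2 := H t t1 t2 in
        conj (le_trans h1 BB') (le_trans h2 BB')) exB.
  by exists B; split => // t t1 t2 i j; apply: (HBt (i, j)).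
pose Bf m := proj1_sig (constructive_indefinite_description _ (HB m)).
have HBf m : 0 <= Bf m /\ forall t, a m <= t -> t <= 1 ->
   forall i j, `|Ut t i j| <= Bf m /\ `|invmx (Ut t) i j| <= Bf m.
  exact: (proj2_sig (constructive_indefinite_description _ (HB m))).
pose em (m : nat) : F := ((m.+1%:R) * ((n ^ 3)%:R * Bf m ^+ 3 + 1))^-1.
have em0 m : 0 < em m.
  have := HBf m => -[B0 _].
  by rewrite invr_gt0 mulr_gt0 ?ltr0n // ltr_wpDl // mulr_ge0 // exprn_ge0.
have HD : forall m, exists d : R, 0 < d /\ forall (p : 'I_n * 'I_n * 'I_n) x, in01 x -> x < d ->
    `|transformed Uh c p.1.1 p.1.2 p.2 x - ch p.1.1 p.1.2 p.2| < em m.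
  move=> m.
  have exd : forall p : 'I_n * 'I_n * 'I_n, exists2 d : R, 0 < d & forall x, in01 x -> x < d ->
      `|transformed Uh c p.1.1 p.1.2 p.2 x - ch p.1.1 p.1.2 p.2| < em m.
    by move=> [[i j] k]; apply: cH.
  have [d d0 Hd] := fin_thr (T := ('I_n * 'I_n * 'I_n)%type)
    (P := fun p d => forall x, in01 x -> x < d ->
      `|transformed Uh c p.1.1 p.1.2 p.2 x - ch p.1.1 p.1.2 p.2| < em m)
    (fun p d d' H d'0 d'd x x01 xd => H x x01 (lt_le_trans xd d'd)) exd.
  by exists d; split.
pose Df m := proj1_sig (constructive_indefinite_description _ (HD m)).
have HDf m : 0 < Df m /\ forall (p : 'I_n * 'I_n * 'I_n) x, in01 x -> x < Df m ->
    `|transformed Uh c p.1.1 p.1.2 p.2 x - ch p.1.1 p.1.2 p.2| < em m.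
  exact: (proj2_sig (constructive_indefinite_description _ (HD m))).
have Dpos m : 0 < Df m by case: (HDf m).
pose h (t : R) := minr t (Dmin Df (mf t) / 2).
have hpos t : in01 t -> 0 <= h t.
  case/andP=> t0 _; rewrite le_min ltW //= divr_ge0 // ltW //; exact: Dmin_pos.
pose f := fof h.
have fle x : in01 x -> f x <= h x.
  move=> x01; have := fof_le hpos x x01; rewrite subrr.
  by rewrite (_ : maxr 0 0 = 0) ?addr0 // /maxr ltxx.
have fpos x : in01 x -> 0 < f x.
  move=> x01; have /andP[x0 x1] := x01.
  have x201 : in01 (x / 2) by apply/andP; split; [rewrite divr_gt0 | lra].
  pose L := minr (x / 2) (Dmin Df (mf (x / 2)) / 2).
  have L0 : 0 < L by rewrite lt_min divr_gt0 //= divr_gt0 // Dmin_pos.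
  apply: (lt_le_trans L0); apply: fof_lb => t t01.
  have mx : maxr 0 (x - t) >= x - t by rewrite le_max lexx orbT.
  have m0 : maxr 0 (x - t) >= 0 by rewrite le_max lexx.
  have Lx : L <= x / 2 by rewrite ge_min lexx.
  have := hpos t t01 => ht.
  have [tx|tx] := lerP (x / 2) t; last by lra.
  have : L <= h t.
    rewrite le_min; apply/andP; split; first exact: le_trans Lx tx.
    rewrite ge_min; apply/orP; right; rewrite ler_pM2r // ?invr_gt0 //.
    by apply: Dmin_anti; apply: mf_anti.
  lra.
exists f; split.
- move=> x x01 e e0; exists e => // y y01 yx.
  exact: le_lt_trans (fof_lip2 hpos y x) yx.
- move=> x x01; rewrite /in01 fpos //=.
  apply: (le_trans (fle x x01)); have /andP[_ x1] := x01.
  by apply: le_trans x1; rewrite ge_min lexx.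
- by left => x y _ _; apply: fof_mono.
- move=> e e0; exists e => // x x01 xe.
  rewrite gtr0_norm ?fpos //; apply: le_lt_trans xe.
  by apply: (le_trans (fle x x01)); rewrite ge_min lexx.
move=> i' j' k' eps eps0.
have e20 : 0 < eps / 2 by rewrite divr_gt0.
have [d1 d10 Hd1] := cT i' j' k' _ e20.
have [M HM] := HA _ e20.
exists (minr d1 (a M)); first by rewrite lt_min d10 invr_gt0 ltr0n.
move=> x x01; rewrite lt_min => /andP[xd1 xM].
pose m := mf x.
have Mm : (M < m)%N := mf_big x01 xM.
have fx01 : in01 (f x).
  rewrite /in01 fpos //=; apply: (le_trans (fle x x01)); have /andP[_ x1] := x01.
  by apply: le_trans x1; rewrite ge_min lexx.
have fxD : f x < Df m.
  apply: (le_lt_trans (fle x x01)).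
  have : h x <= Dmin Df m / 2 by rewrite /h ge_min lexx orbT.
  move=> /le_lt_trans; apply.
  apply: (@lt_le_trans _ _ (Dmin Df m)); last exact: Dmin_le.
  by rewrite ltr_pdivrMr // ltr_pMr ?ltr1n // Dmin_pos.
have uh := GUh _ fx01; have ut := GUt _ x01.
have [B0 HBm] := HBf m.
have [_ HDm] := HDf m.
have am : a m <= x by apply: ltW; apply: mf_lt.
have x1 : x <= 1 by case/andP: x01.
have E1 : `|transformed (fun _ => Ut x) ch i' j' k' x - ct i' j' k'| < eps / 2 := Hd1 x x01 xd1.
have E2 : `|transformed (fun _ => Ut x)
     (fun a b c' => transformed Uh c a b c' (f x) - ch a b c') i' j' k' x|
     <= (n ^ 3)%:R * Bf m ^+ 3 * em m.
  apply: trans_bound => //.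
  - by move=> a0 b0; case: (HBm x am x1 a0 b0).
  - by move=> a0 b0; case: (HBm x am x1 a0 b0).
  - by move=> a0 b0 c0; apply: ltW; apply: (HDm (a0, b0, c0)).
have E3 : (n ^ 3)%:R * Bf m ^+ 3 * em m < eps / 2.
  apply: le_lt_trans HM.
  have K0 : 0 <= (n ^ 3)%:R * Bf m ^+ 3 :> F by rewrite mulr_ge0 // exprn_ge0.
  apply: (@le_trans _ _ (m.+1%:R^-1)).
    rewrite /em invfM mulrCA -[X in _ <= X]mulr1 ler_wpM2l ?invr_ge0 ?ler0n //.
    by rewrite ler_pdivrMr ?ltr_wpDl // mul1r lerDl.
  by rewrite lef_pV2 ?posrE ?ltr0n // ler_nat ltnW.
rewrite (_ : transformed (fun eps0 => Uh (f eps0) *m Ut eps0) c i' j' k' x =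
  transformed (fun _ => Ut x) (fun a b c' => transformed Uh c a b c' (f x)) i' j' k' x);
  last exact: (trans_mul (A := Uh (f x)) (B := Ut x)).
rewrite (_ : transformed (fun _ => Ut x) (fun a b c' => transformed Uh c a b c' (f x)) i' j' k' x
   - ct i' j' k' = (transformed (fun _ => Ut x) ch i' j' k' x - ct i' j' k') +
   transformed (fun _ => Ut x) (fun a b c' => transformed Uh c a b c' (f x) - ch a b c') i' j' k' x);
  last by rewrite -trans_sub; ring.
apply: (le_lt_trans (ler_normD _ _)).
by rewrite [eps](splitr eps) ltr_leD // (le_trans E2) // ltW.
Qed.
Lemma archR (R : realType) (e : R) : 0 < e -> exists m : nat, (m.+1%:R : R)^-1 < e.
Proof. by move=> e0; have [k hk] := ltr_add_invr e0; exists k; rewrite add0r in hk. Qed.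

Lemma archC (R : realType) (e : R[i]) : 0 < e -> exists m : nat, (m.+1%:R : R[i])^-1 < e.
Proof.
case: e => a b; rewrite ltcE /= => /andP[/eqP -> a0].
have [m hm] := archR a0; exists m.
rewrite -(rmorph_nat (real_complex R)) -fmorphV.
by rewrite (_ : a +i* 0 = a%:C)%C // ltcR.
Qed.

Theorem mainTheorem11 (R : realType) :
  composition_property R R /\ composition_property R (complex R).
Proof.
by split; apply: comp_gen; [exact: archR | exact: archC].
Qed.
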